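(* Let $p_\theta(x,z)$ be a joint probability density on $\mathcal{X}\times\mathcal{Z}$ with marginals $p_\theta(x)$, $p_\theta(z)$ and conditionals $p_\theta(x\mid z)$, $p_\theta(z\mid x)$. Let $p_{\mathrm{data}}(x)$ be a probability density on $\mathcal{X}$ and $q_\phi(z\mid x)$ a conditional density on $\mathcal{Z}$ for each $x$; set $q_\phi(x,z)=p_{\mathrm{data}}(x)\,q_\phi(z\mid x)$, $q_\phi(z)=\int p_{\mathrm{data}}(x)q_\phi(z\mid x)\,\mathrm{d}x$ and $q_\phi(x\mid z)=q_\phi(x,z)/q_\phi(z)$. Consider the three conditions (L) Likelihood Consistency: $p_\theta(x\mid z)=q_\phi(x\mid z)$ for all $x,z$; (P) Prior Consistency: $p_\theta(z)=q_\phi(z)$ for all $z$; (Q) Posterior Consistency: $p_\theta(z\mid x)=q_\phi(z\mid x)$ for all $x,z$. Then: 1. If (L) and (P) hold, then (Q) holds and $p_\theta(x)=p_{\mathrm{data}}(x)$. 2. If (L) and (Q) hold, then (P) holds and $p_\theta(x)=p_{\mathrm{data}}(x)$. 3. If (Q) and (P) hold and the family $\{q_\phi(x\mid z)\}_z$ is complete, then $p_\theta(x)=p_{\mathrm{data}}(x)$ (almost everywhere) and (L) holds.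
   Context: All densities are assumed strictly positive so that conditionals and ratios are defined. The family $\{q_\phi(\cdot\mid z)\}_{z\in\mathcal{Z}}$ is called complete if for every measurable $g$ on $\mathcal{X}$ that is integrable under each $q_\phi(\cdot\mid z)$, $\mathbb{E}_{x\sim q_\phi(x\mid z)}[g(x)]=0$ for all $z$ implies $g=0$ almost everywhere. *)

(* Defs.v *)
From HB Require Import structures.
From mathcomp Require Import all_boot all_order all_algebra.
From mathcomp Require Import all_classical all_reals all_analysis.
Set Implicit Arguments. Unset Strict Implicit. Unset Printing Implicit Defensive.
Import Order.TTheory GRing.Theory Num.Theory.
Local Open Scope classical_set_scope.
Local Open Scope ring_scope.

(* A joint density p is written as a curried function p x z = p(x,z);
   q x z stands for the conditional density q_phi(z | x). *)
Section Densities.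
Context {R : realType} {dX dZ : measure_display}
  {X : measurableType dX} {Z : measurableType dZ}.

Definition marg_x (muZ : set Z -> \bar R) (p : X -> Z -> R) (x : X) : R :=
  fine (\int[muZ]_z (p x z)%:E).
Definition marg_z (muX : set X -> \bar R) (p : X -> Z -> R) (z : Z) : R :=
  fine (\int[muX]_x (p x z)%:E).
Definition cond_z_given_x (muZ : set Z -> \bar R) (p : X -> Z -> R) (x : X) (z : Z) : R :=
  p x z / marg_x muZ p x.
Definition cond_x_given_z (muX : set X -> \bar R) (p : X -> Z -> R) (x : X) (z : Z) : R :=
  p x z / marg_z muX p z.

Definition q_joint (pdata : X -> R) (q : X -> Z -> R) (x : X) (z : Z) : R :=
  pdata x * q x z.
Definition q_z (muX : set X -> \bar R) (pdata : X -> R) (q : X -> Z -> R) (z : Z) : R :=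
  marg_z muX (q_joint pdata q) z.
Definition q_x_given_z (muX : set X -> \bar R) (pdata : X -> R) (q : X -> Z -> R)
  (x : X) (z : Z) : R :=
  q_joint pdata q x z / q_z muX pdata q z.

Definition likelihood_consistency (muX : set X -> \bar R) (p : X -> Z -> R)
  (pdata : X -> R) (q : X -> Z -> R) : Prop :=
  forall x z, cond_x_given_z muX p x z = q_x_given_z muX pdata q x z.
Definition prior_consistency (muX : set X -> \bar R) (p : X -> Z -> R)
  (pdata : X -> R) (q : X -> Z -> R) : Prop :=
  forall z, marg_z muX p z = q_z muX pdata q z.
Definition posterior_consistency (muZ : set Z -> \bar R) (p : X -> Z -> R)
  (q : X -> Z -> R) : Prop :=
  forall x z, cond_z_given_x muZ p x z = q x z.

Definition complete_family (muX : set X -> \bar R) (qc : X -> Z -> R) : Prop :=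
  forall g : X -> R, measurable_fun setT g ->
    (forall z, muX.-integrable setT (fun x => (g x * qc x z)%:E)) ->
    (forall z, (\int[muX]_x (g x * qc x z)%:E = 0)%E) ->
    {ae muX, forall x, g x = 0}.

End Densities.

(* Main.v *)
Require Import Defs.
From HB Require Import structures.
From mathcomp Require Import all_boot all_order all_algebra.
From mathcomp Require Import all_classical all_reals all_analysis.
From mathcomp Require Import measurable_realfun.
From mathcomp Require Import ring.
Import Order.TTheory GRing.Theory Num.Theory.
Local Open Scope classical_set_scope.
Local Open Scope ring_scope.

Lemma int_pos d (T : measurableType d) (R : realType) (mu : {measure set T -> \bar R}) (h f : T -> R) :
  measurable_fun setT h -> (\int[mu]_x (h x)%:E = 1)%E -> (forall x, 0 < f x) ->
  mu.-integrable setT (EFin \o f) -> 0 < fine (\int[mu]_x (f x)%:E).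
Proof.
move=> mh h1 fpos fint.
have mf : measurable_fun setT f by apply/measurable_EFinP; exact: (measurable_int mu fint).
have fin := integrable_fin_num measurableT fint.
have ge0 : (0 <= \int[mu]_x (f x)%:E)%E.
  by apply: integral_ge0 => x _; rewrite lee_fin ltW.
apply: fine_gt0; move: fin => /fin_numPlt /andP[_ ->]; rewrite andbT lt0e ge0 andbT.
apply/eqP => i0.
have : (\int[mu]_x `|(f x)%:E| = 0)%E.
  by rewrite -i0; apply: eq_integral => x _; rewrite gee0_abs // lee_fin ltW.
move/(ae_eq_integral_abs mu measurableT (proj2 (measurable_EFinP _ _) mf)).
case=> A [mA muA sA].
have negT : mu.-negligible (setT : set T).
  exists A; split => // x _; apply: sA => /= H.
  by move: (H I) => [] /eqP; rewrite gt_eqF.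
have : (\int[mu]_x (h x)%:E = \int[mu]_x (cst 0%E) x)%E.
  apply: ae_eq_integral => //.
  - exact/measurable_EFinP.
  - by apply: negligibleS negT.
by rewrite h1 integral0 => -[] /eqP; rewrite oner_eq0.
Qed.
Theorem corollary1 (R : realType) (dX dZ : measure_display)
  (X : measurableType dX) (Z : measurableType dZ)
  (muX : {sigma_finite_measure set X -> \bar R})
  (muZ : {sigma_finite_measure set Z -> \bar R})
  (p : X -> Z -> R) (pdata : X -> R) (q : X -> Z -> R) :
  (* p_theta(x,z) is a strictly positive probability density on X * Z *)
  measurable_fun setT (fun xz : X * Z => p xz.1 xz.2) ->
  (forall x z, 0 < p x z) ->
  (\int[muX \x muZ]_xz (p xz.1 xz.2)%:E = 1)%E ->
  (* its marginals are (finite) real numbers *)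
  (forall x, muZ.-integrable setT (fun z => (p x z)%:E)) ->
  (forall z, muX.-integrable setT (fun x => (p x z)%:E)) ->
  (* p_data is a strictly positive probability density on X *)
  measurable_fun setT pdata ->
  (forall x, 0 < pdata x) ->
  (\int[muX]_x (pdata x)%:E = 1)%E ->
  (* q x z = q_phi(z|x) is a strictly positive conditional density on Z *)
  measurable_fun setT (fun xz : X * Z => q xz.1 xz.2) ->
  (forall x z, 0 < q x z) ->
  (forall x, \int[muZ]_z (q x z)%:E = 1)%E ->
  (* q_phi(z) is a (finite) real number *)
  (forall z, muX.-integrable setT (fun x => (pdata x * q x z)%:E)) ->
  (* 1. (L) and (P) imply (Q) and p_theta(x) = p_data(x) *)
  (likelihood_consistency muX p pdata q -> prior_consistency muX p pdata q ->
     posterior_consistency muZ p q /\ forall x, marg_x muZ p x = pdata x) /\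
  (* 2. (L) and (Q) imply (P) and p_theta(x) = p_data(x) *)
  (likelihood_consistency muX p pdata q -> posterior_consistency muZ p q ->
     prior_consistency muX p pdata q /\ forall x, marg_x muZ p x = pdata x) /\
  (* 3. (Q), (P) and completeness imply p_theta = p_data a.e. and (L) (a.e. in x) *)
  (posterior_consistency muZ p q -> prior_consistency muX p pdata q ->
     complete_family muX (q_x_given_z muX pdata q) ->
     {ae muX, forall x, marg_x muZ p x = pdata x} /\
     forall z, {ae muX, forall x, cond_x_given_z muX p x z = q_x_given_z muX pdata q x z}).
Proof.
move=> mp ppos pint pxint pzint mpd pdpos pdint mq qpos qint qzint.
have pZpos z : 0 < marg_z muX p z.
  exact: (@int_pos _ _ _ muX pdata (fun x => p x z) mpd pdint (fun x => ppos x z) (pzint z)).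
have qZpos z : 0 < q_z muX pdata q z.
  exact: (@int_pos _ _ _ muX pdata (fun x => pdata x * q x z) mpd pdint
    (fun x => mulr_gt0 (pdpos x) (qpos x z)) (qzint z)).
have pXE x : (\int[muZ]_z (p x z)%:E)%E = (marg_x muZ p x)%:E.
  by rewrite /marg_x fineK // (integrable_fin_num measurableT (pxint x)).
have pZE z : (\int[muX]_x (p x z)%:E)%E = (marg_z muX p z)%:E.
  by rewrite /marg_z fineK // (integrable_fin_num measurableT (pzint z)).
have qZE z : (\int[muX]_x (pdata x * q x z)%:E)%E = (q_z muX pdata q z)%:E.
  by rewrite /q_z /marg_z /q_joint fineK // (integrable_fin_num measurableT (qzint z)).
have mpE : measurable_fun setT (EFin \o (fun xz : X * Z => p xz.1 xz.2)).
  exact/measurable_EFinP.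
have mpE0 : forall xz : X * Z, (0 <= (EFin \o (fun xz : X * Z => p xz.1 xz.2)) xz)%E.
  by move=> xz; rewrite /= lee_fin ltW.
have mpX : measurable_fun setT (marg_x muZ p).
  apply/measurable_EFinP.
  apply: eq_measurable_fun (measurable_fun_fubini_tonelli_F (m2 := muZ) _ mpE mpE0).
  by move=> x _; rewrite /fubini_F /= pXE.
have intpX : (\int[muX]_x (marg_x muZ p x)%:E)%E = 1%E.
  rewrite -pint (fubini_tonelli1 (m1 := muX) (m2 := muZ) _ mpE mpE0).
  by apply: eq_integral => x _; rewrite /fubini_F /= pXE.
have mqx x : measurable_fun setT (fun z => (q x z)%:E).
  apply/measurable_EFinP.
  exact: (measurable_fun_pair2 (f := fun xz : X * Z => q xz.1 xz.2) x mq).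
have pQ : posterior_consistency muZ p q -> forall x z, p x z = marg_x muZ p x * q x z.
  move=> Q x z; have := Q x z; rewrite /cond_z_given_x.
  have [->|nz] := eqVneq (marg_x muZ p x) 0.
    by rewrite invr0 mulr0 => h; move: (qpos x z); rewrite -h ltxx.
  by move=> <-; rewrite mulrC divfK.
have part1 : likelihood_consistency muX p pdata q -> prior_consistency muX p pdata q ->
     posterior_consistency muZ p q /\ forall x, marg_x muZ p x = pdata x.
  move=> L P.
  have pj x z : p x z = pdata x * q x z.
    have := L x z; rewrite /cond_x_given_z /q_x_given_z /q_joint -(P z) => h.
    have nz : marg_z muX p z != 0 by rewrite gt_eqF.
    by rewrite -[p x z](divfK nz) h divfK.
  have pXd x : marg_x muZ p x = pdata x.
    rewrite /marg_x.
    under eq_integral => z _ do rewrite pj EFinM.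
    have f0 : forall z, [set: Z] z -> (0 <= (q x z)%:E)%E.
      by move=> z _; rewrite lee_fin ltW.
    rewrite (ge0_integralZl_EFin _ measurableT f0 (mqx x) (ltW (pdpos x))).
    by rewrite qint mule1.
  split => [x z|x]; last exact: pXd.
  by rewrite /cond_z_given_x pXd pj mulrC mulKf // gt_eqF.
split; first exact: part1.
split.
  move=> L Q.
  have pq := pQ Q.
  have K x z : marg_x muZ p x * q_z muX pdata q z = pdata x * marg_z muX p z.
    have := L x z; rewrite /cond_x_given_z /q_x_given_z /q_joint pq.
    move=> /eqP; rewrite eqr_div; last 2 first.
      exact: lt0r_neq0.
      exact: lt0r_neq0.
    move=> /eqP h.
    apply: (mulIf (lt0r_neq0 (qpos x z))).
    by rewrite mulrAC h mulrAC.
  have PZ : prior_consistency muX p pdata q.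
    move=> z.
    have e1 : (\int[muX]_x (marg_x muZ p x * q_z muX pdata q z)%:E)%E
              = (q_z muX pdata q z)%:E.
      under eq_integral => x _ do rewrite mulrC EFinM.
      have f0 : forall x, [set: X] x -> (0 <= (marg_x muZ p x)%:E)%E.
        move=> x _; rewrite lee_fin.
        by rewrite /marg_x fine_ge0 // integral_ge0 // => y _; rewrite lee_fin ltW.
      have mpXE : measurable_fun setT (fun x => (marg_x muZ p x)%:E).
        exact/measurable_EFinP.
      rewrite (ge0_integralZl_EFin _ measurableT f0 mpXE (ltW (qZpos z))).
      by rewrite intpX mule1.
    have e2 : (\int[muX]_x (pdata x * marg_z muX p z)%:E)%E
              = (marg_z muX p z)%:E.
      under eq_integral => x _ do rewrite mulrC EFinM.
      have f0 : forall x, [set: X] x -> (0 <= (pdata x)%:E)%E.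
        by move=> x _; rewrite lee_fin ltW.
      have mpdE : measurable_fun setT (fun x => (pdata x)%:E).
        exact/measurable_EFinP.
      rewrite (ge0_integralZl_EFin _ measurableT f0 mpdE (ltW (pZpos z))).
      by rewrite pdint mule1.
    move: e1; under eq_integral => x _ do rewrite K.
    by rewrite e2 => -[].
  split; first exact: PZ.
  exact: (part1 L PZ).2.
move=> Q P C.
have pq := pQ Q.
have mpdV : measurable_fun setT (fun x => (pdata x)^-1).
  have h : measurable_fun setT ((fun r : R => r `^ (-1)) \o pdata).
    by apply: measurableT_comp => //; exact: measurable_powR.
  apply: eq_measurable_fun h.
  by move=> x _ /=; rewrite powR_inv1 // ltW.
have gae : {ae muX, forall x, (marg_x muZ p x - pdata x) / pdata x = 0}.
  have eqi z : {in setT, (fun x => ((p x z)%:E - (pdata x * q x z)%:E) * ((q_z muX pdata q z)^-1)%:E)%E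
       =1 (fun x => ((marg_x muZ p x - pdata x) / pdata x * q_x_given_z muX pdata q x z)%:E)}.
    move=> x _; rewrite /q_x_given_z /q_joint pq -EFinB -EFinM; congr EFin.
    have := gt_eqF (pdpos x); have := gt_eqF (qZpos z).
    move=> h1 h2; field.
    by rewrite h1 h2.
  have ii z : muX.-integrable setT (fun x => ((p x z)%:E - (pdata x * q x z)%:E) * ((q_z muX pdata q z)^-1)%:E)%E.
    apply: (integrableZr measurableT).
    exact: integrableB.
  apply: C.
  - apply: measurable_funM => //; exact: measurable_funB.
  - move=> z; exact: eq_integrable measurableT _ _ (eqi z) (ii z).
  - move=> z; rewrite -(eq_integral _ _ (eqi z)).
    rewrite integralZr //; last exact: integrableB.
    rewrite (integralB_EFin measurableT (pzint z) (qzint z)).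
    by rewrite pZE qZE P -EFinB subrr mul0e.
have pxe : {ae muX, forall x, marg_x muZ p x = pdata x}.
  apply: filterS gae => x /eqP.
  rewrite mulf_eq0 invr_eq0 (gt_eqF (pdpos x)) orbF subr_eq0.
  by move/eqP.
split; first exact: pxe.
move=> z; apply: filterS pxe => x h.
by rewrite /cond_x_given_z /q_x_given_z /q_joint pq h P.
Qed.
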